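(* Let $s=2$ and consider problem (P) in the context, which has the single variable $I_1=P_2$ (with $P_1=P_{\max}-P_2$). Then the optimal power allocation $(P_1^{**},P_2^{**})$ satisfies: 1. if $\alpha_1<\beta_1$, then $P_1^{**}=P_{\max}$ (so $P_2^{**}=0$); 2. if $h_2\beta_1<h_0\alpha_1$, then $P_2^{**}=P_{\max}$; 3. if $\alpha_1>\beta_1$ and $h_2\beta_1>h_0\alpha_1$, then $P_2^{**}=\min(r_1,P_{\max})$, where $r_1:=\frac{\alpha_1-\beta_1}{h_2\beta_1-h_0\alpha_1}$.
   Context: Parameters: - $P_{\max}>0$ and positive reals $h_0<h_1<h_2$. - Probabilities $\delta_0,\delta_1,\delta_2$ summing to $1$. - $\theta_1=\delta_0$, $\theta_2=\delta_0+\delta_1$, and $\Delta_k=\theta_k(1-\theta_k)$. - $\alpha_1:=(h_2-h_1)\Delta_2$ and $\beta_1:=(h_1-h_0)\Delta_1$. Problem (P). Over $P_1,P_2\ge0$ with $P_1+P_2=P_{\max}$, maximize $\Delta_1LR_1+\Delta_2LR_2$, where - $R_1=\frac12\big[\log\big(1+\frac{h_1P_1}{1+h_1P_2}\big)-\log\big(1+\frac{h_0P_1}{1+h_0P_2}\big)\big]$, - $R_2=\frac12\big[\log(1+h_2P_2)-\log(1+h_1P_2)\big]$. *)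

(* Defs.v *)
From Stdlib Require Import Reals Lra.
Open Scope R_scope.

Definition theta1 (d0 d1 d2 : R) : R := d0.
Definition theta2 (d0 d1 d2 : R) : R := d0 + d1.
Definition Delta (t : R) : R := t * (1 - t).

Definition alpha1 (h0 h1 h2 d0 d1 d2 : R) : R :=
  (h2 - h1) * Delta (theta2 d0 d1 d2).
Definition beta1 (h0 h1 h2 d0 d1 d2 : R) : R :=
  (h1 - h0) * Delta (theta1 d0 d1 d2).

(* rates R_1, R_2 (natural log; the base is irrelevant) *)
Definition Rate1 (h0 h1 P1 P2 : R) : R :=
  / 2 * (ln (1 + h1 * P1 / (1 + h1 * P2)) - ln (1 + h0 * P1 / (1 + h0 * P2))).
Definition Rate2 (h1 h2 P2 : R) : R :=
  / 2 * (ln (1 + h2 * P2) - ln (1 + h1 * P2)).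

Definition objP (L h0 h1 h2 d0 d1 d2 P1 P2 : R) : R :=
  Delta (theta1 d0 d1 d2) * L * Rate1 h0 h1 P1 P2
  + Delta (theta2 d0 d1 d2) * L * Rate2 h1 h2 P2.

Definition feasible (Pmax P1 P2 : R) : Prop :=
  0 <= P1 /\ 0 <= P2 /\ P1 + P2 = Pmax.

Definition optimalP (L Pmax h0 h1 h2 d0 d1 d2 P1 P2 : R) : Prop :=
  feasible Pmax P1 P2 /\
  forall Q1 Q2, feasible Pmax Q1 Q2 ->
    objP L h0 h1 h2 d0 d1 d2 Q1 Q2 <= objP L h0 h1 h2 d0 d1 d2 P1 P2.

(* Main.v *)
Require Import Defs.
From Stdlib Require Import Reals.
From Stdlib Require Import Lra Psatz.
From Coquelicot Require Import Coquelicot.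
Open Scope R_scope.

Definition FF (D1 D2 h0 h1 h2 x : R) :=
  D1*(ln(1+h0*x) - ln(1+h1*x)) + D2*(ln(1+h2*x)-ln(1+h1*x)).
Definition gg (D1 D2 h0 h1 h2 x : R) :=
  ((h2-h1)*D2)*(1+h0*x) - ((h1-h0)*D1)*(1+h2*x).
Lemma FF_der D1 D2 h0 h1 h2 x : 0 < h0 -> 0 < h1 -> 0 < h2 -> 0 <= x ->
  derivable_pt_lim (FF D1 D2 h0 h1 h2) x
   (gg D1 D2 h0 h1 h2 x / ((1+h0*x)*(1+h1*x)*(1+h2*x))).
Proof.
intros H0 H1 H2 Hx.
assert (A0: 0 < 1+h0*x) by nra. assert (A1: 0 < 1+h1*x) by nra.
assert (A2: 0 < 1+h2*x) by nra.
apply is_derive_Reals. unfold FF.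
auto_derive. repeat split; lra.
unfold gg. field. lra.
Qed.

Lemma FF_inc D1 D2 h0 h1 h2 a b : 0 < h0 -> 0 < h1 -> 0 < h2 -> 0 <= a -> a < b ->
  (forall c, a < c < b -> 0 < gg D1 D2 h0 h1 h2 c) ->
  FF D1 D2 h0 h1 h2 a < FF D1 D2 h0 h1 h2 b.
Proof.
intros H0 H1 H2 Ha Hab Hg.
destruct (MVT_cor2 (FF D1 D2 h0 h1 h2)
  (fun x => gg D1 D2 h0 h1 h2 x / ((1+h0*x)*(1+h1*x)*(1+h2*x))) a b Hab)
  as [c [E Hc]].
{ intros c Hc. apply FF_der; lra. }
assert (G := Hg c Hc).
assert (A0: 0 < 1+h0*c) by nra. assert (A1: 0 < 1+h1*c) by nra.
assert (A2: 0 < 1+h2*c) by nra.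
assert (0 < gg D1 D2 h0 h1 h2 c / ((1+h0*c)*(1+h1*c)*(1+h2*c))).
{ apply Rdiv_lt_0_compat; [lra|]. apply Rmult_lt_0_compat; nra. }
nra.
Qed.

Lemma FF_dec D1 D2 h0 h1 h2 a b : 0 < h0 -> 0 < h1 -> 0 < h2 -> 0 <= a -> a < b ->
  (forall c, a < c < b -> gg D1 D2 h0 h1 h2 c < 0) ->
  FF D1 D2 h0 h1 h2 b < FF D1 D2 h0 h1 h2 a.
Proof.
intros H0 H1 H2 Ha Hab Hg.
destruct (MVT_cor2 (FF D1 D2 h0 h1 h2)
  (fun x => gg D1 D2 h0 h1 h2 x / ((1+h0*x)*(1+h1*x)*(1+h2*x))) a b Hab)
  as [c [E Hc]].
{ intros c Hc. apply FF_der; lra. }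
assert (G := Hg c Hc).
assert (A0: 0 < 1+h0*c) by nra. assert (A1: 0 < 1+h1*c) by nra.
assert (A2: 0 < 1+h2*c) by nra.
assert (0 < - gg D1 D2 h0 h1 h2 c / ((1+h0*c)*(1+h1*c)*(1+h2*c))).
{ apply Rdiv_lt_0_compat; [lra|]. apply Rmult_lt_0_compat; nra. }
unfold Rdiv in *. nra.
Qed.

Lemma obj_eq L Pmax h0 h1 h2 d0 d1 d2 Q1 Q2 :
  0 < h0 -> 0 < h1 -> 0 < h2 -> feasible Pmax Q1 Q2 ->
  objP L h0 h1 h2 d0 d1 d2 Q1 Q2 =
  L / 2 * (Defs.Delta (theta1 d0 d1 d2) * (ln (1 + h1*Pmax) - ln (1 + h0*Pmax))
     + FF (Defs.Delta (theta1 d0 d1 d2)) (Defs.Delta (theta2 d0 d1 d2)) h0 h1 h2 Q2).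
Proof.
intros H0 H1 H2 [F1 [F2 F3]].
assert (A0: 0 < 1+h0*Q2) by nra. assert (A1: 0 < 1+h1*Q2) by nra.
assert (B0: 0 < 1+h0*Pmax) by nra. assert (B1: 0 < 1+h1*Pmax) by nra.
unfold objP, Rate1, Rate2, FF.
replace Q1 with (Pmax - Q2) by lra.
replace (1 + h1 * (Pmax - Q2) / (1 + h1 * Q2)) with ((1+h1*Pmax)/(1+h1*Q2))
  by (field; lra).
replace (1 + h0 * (Pmax - Q2) / (1 + h0 * Q2)) with ((1+h0*Pmax)/(1+h0*Q2))
  by (field; lra).
rewrite !ln_div by lra. field.
Qed.

Theorem lemma2 (L Pmax h0 h1 h2 d0 d1 d2 P1 P2 : R) :
  0 < L -> 0 < Pmax ->
  0 < h0 -> h0 < h1 -> h1 < h2 ->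
  0 <= d0 -> 0 <= d1 -> 0 <= d2 -> d0 + d1 + d2 = 1 ->
  optimalP L Pmax h0 h1 h2 d0 d1 d2 P1 P2 ->
  let a1 := alpha1 h0 h1 h2 d0 d1 d2 in
  let b1 := beta1 h0 h1 h2 d0 d1 d2 in
  (a1 < b1 -> P1 = Pmax /\ P2 = 0) /\
  (h2 * b1 < h0 * a1 -> P2 = Pmax) /\
  (a1 > b1 -> h2 * b1 > h0 * a1 ->
     P2 = Rmin ((a1 - b1) / (h2 * b1 - h0 * a1)) Pmax).
Proof.
intros HL HP H0 H01 H12 Hd0 Hd1 Hd2 Hs [Hf Hopt] a1 b1.
set (D1 := Defs.Delta (theta1 d0 d1 d2)). set (D2 := Defs.Delta (theta2 d0 d1 d2)).
assert (HD1 : 0 <= D1).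
{ unfold D1, Defs.Delta, theta1. nra. }
assert (HD2 : 0 <= D2).
{ unfold D2, Defs.Delta, theta2. nra. }
assert (Ea : a1 = (h2-h1)*D2) by reflexivity.
assert (Eb : b1 = (h1-h0)*D1) by reflexivity.
assert (Ha1 : 0 <= a1) by (rewrite Ea; nra).
assert (Hb1 : 0 <= b1) by (rewrite Eb; nra).
assert (Eg : forall c, gg D1 D2 h0 h1 h2 c = (a1 - b1) + c * (h0*a1 - h2*b1)).
{ intro c. unfold gg. rewrite Ea, Eb. ring. }
assert (h1p : 0 < h1) by lra. assert (h2p : 0 < h2) by lra.
assert (Cmp : forall y, 0 <= y <= Pmax ->
   FF D1 D2 h0 h1 h2 y <= FF D1 D2 h0 h1 h2 P2).
{ intros y Hy.
  assert (Hfy : feasible Pmax (Pmax - y) y) by (unfold feasible; lra).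
  pose proof (Hopt _ _ Hfy) as Ho.
  rewrite (obj_eq L Pmax h0 h1 h2 d0 d1 d2 _ _ H0 h1p h2p Hfy) in Ho.
  rewrite (obj_eq L Pmax h0 h1 h2 d0 d1 d2 _ _ H0 h1p h2p Hf) in Ho.
  fold D1 D2 in Ho.
  assert (0 < L/2) by lra.
  apply Rmult_le_reg_l in Ho; lra. }
destruct Hf as [F1 [F2 F3]].
split; [|split].
- intros Hab.
  destruct (Req_dec P2 0) as [Z|Z]; [split; lra|].
  exfalso.
  assert (FF D1 D2 h0 h1 h2 P2 < FF D1 D2 h0 h1 h2 0).
  { apply FF_dec; try lra. intros c Hc. rewrite Eg. assert (h0*a1 - h2*b1 < 0) by nra. nra. }
  pose proof (Cmp 0 ltac:(lra)). lra.
- intros Hab.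
  destruct (Req_dec P2 Pmax) as [Z|Z]; [lra|].
  exfalso.
  assert (FF D1 D2 h0 h1 h2 P2 < FF D1 D2 h0 h1 h2 Pmax).
  { apply FF_inc; try lra. intros c Hc. rewrite Eg.
    assert (a1 - b1 > 0) by nra. nra. }
  pose proof (Cmp Pmax ltac:(lra)). lra.
- intros Hab Hc.
  set (r := (a1 - b1) / (h2 * b1 - h0 * a1)).
  assert (Hr : 0 < r) by (apply Rdiv_lt_0_compat; lra).
  assert (Er : r * (h2 * b1 - h0 * a1) = a1 - b1) by (unfold r; field; lra).
  set (y := Rmin r Pmax).
  assert (Hy1 : y <= r) by apply Rmin_l.
  assert (Hy2 : y <= Pmax) by apply Rmin_r.
  assert (Hy0 : 0 < y) by (unfold y; apply Rmin_glb_lt; lra).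
  destruct (Rtotal_order P2 y) as [Lt|[Eq|Gt]]; [exfalso| exact Eq |exfalso].
  + assert (FF D1 D2 h0 h1 h2 P2 < FF D1 D2 h0 h1 h2 y).
    { apply FF_inc; try lra. intros c Hc'. rewrite Eg. nra. }
    pose proof (Cmp y ltac:(lra)). lra.
  + assert (Hyr : y = r).
    { unfold y, Rmin in *. destruct (Rle_dec r Pmax); lra. }
    assert (FF D1 D2 h0 h1 h2 P2 < FF D1 D2 h0 h1 h2 y).
    { apply FF_dec; try lra. intros c Hc'. rewrite Eg. nra. }
    pose proof (Cmp y ltac:(lra)). lra.
Qed.
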